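(* For integers $k\ge2$ and real $u\ge k$, $$F_k(u)=\sum_{j=0}^{k-1}(-1)^{k-j-1}\,P_{k-j}(u-j)\,F_j(u).$$
   Context: The functions $P_k$ are defined by $P_0(u)=1$ for $u\ge 0$, and for integers $k\ge1$, $P_k:[k,\infty)\to\mathbb{R}$ is the function with $P_k(k)=0$ and $uP_k'(u)=P_{k-1}(u-1)$ for $u\ge k$. The functions $F_k$ are defined by $F_0(u)=1$ for $u\ge0$, and for integers $k\ge1$, $F_k:[k,\infty)\to\mathbb{R}$ is the function with $F_k(k)=0$ and $(u-k+1)F_k'(u)=F_{k-1}(u)$ for $u\ge k$. *)

(* Defs.v *)
From Stdlib Require Import Reals Lra Lia.
From Coquelicot Require Import Coquelicot.
Open Scope R_scope.

(* P : nat -> R -> R is the family P_k of the paper (only the values on the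
   domain [k, +oo) of P_k are constrained).
   P_0(u) = 1 for u >= 0; for k >= 1: P_k(k) = 0, P_k is continuous from the
   right at k, and u P_k'(u) = P_{k-1}(u-1) for u > k. *)
Definition IsPFamily (P : nat -> R -> R) : Prop :=
  (forall u, 0 <= u -> P 0%nat u = 1) /\
  (forall k : nat, (1 <= k)%nat ->
     P k (INR k) = 0 /\
     filterlim (P k) (at_right (INR k)) (locally 0) /\
     (forall u, INR k < u -> is_derive (P k) u (P (k - 1)%nat (u - 1) / u))).

Definition IsFFamily (F : nat -> R -> R) : Prop :=
  (forall u, 0 <= u -> F 0%nat u = 1) /\
  (forall k : nat, (1 <= k)%nat ->
     F k (INR k) = 0 /\
     filterlim (F k) (at_right (INR k)) (locally 0) /\
     (forall u, INR k < u ->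
        is_derive (F k) u (F (k - 1)%nat u / (u - INR k + 1)))).

(* Main.v *)
Require Import Defs.
From Stdlib Require Import Reals Lra Lia.
From Coquelicot Require Import Coquelicot.
Open Scope R_scope.

Lemma lim_mult (F : (R->Prop)->Prop) {FF: Filter F} (a b : R -> R) la lb :
  filterlim a F (locally la) -> filterlim b F (locally lb) ->
  filterlim (fun x => a x * b x) F (locally (la*lb)).
Proof. intros Ha Hb. eapply filterlim_comp_2; [exact Ha|exact Hb|]. apply (filterlim_mult la lb). Qed.

Lemma lim_plus (F : (R->Prop)->Prop) {FF: Filter F} (a b : R -> R) la lb :
  filterlim a F (locally la) -> filterlim b F (locally lb) ->
  filterlim (fun x => a x + b x) F (locally (la+lb)).
Proof. intros Ha Hb. eapply filterlim_comp_2; [exact Ha|exact Hb|]. apply (filterlim_plus la lb). Qed.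

Lemma lim_minus (F : (R->Prop)->Prop) {FF: Filter F} (a b : R -> R) la lb :
  filterlim a F (locally la) -> filterlim b F (locally lb) ->
  filterlim (fun x => a x - b x) F (locally (la-lb)).
Proof.
  intros Ha Hb.
  assert (H := lim_plus F a (fun x => -1 * b x) la (-1 * lb) Ha
     (lim_mult F (fun _ => -1) b (-1) lb (filterlim_const _) Hb)).
  replace (la - lb) with (la + -1*lb) by ring.
  eapply filterlim_ext; [|exact H]. intros; simpl; ring.
Qed.

Lemma lim_sum (F : (R->Prop)->Prop) {FF: Filter F} (g : nat -> R -> R) n :
  (forall j, (j <= n)%nat -> filterlim (g j) F (locally 0)) ->
  filterlim (fun x => sum_f_R0 (fun j => g j x) n) F (locally 0).
Proof.
  induction n; intros H.
  - simpl. apply H; lia.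
  - simpl. replace 0 with (0+0) by ring.
    apply (lim_plus F (fun x => sum_f_R0 (fun j => g j x) n) (g (S n))).
    + apply IHn; intros; apply H; lia.
    + apply H; lia.
Qed.

Lemma is_derive_sum (g : nat -> R -> R) (dg : nat -> R) n x :
  (forall j, (j <= n)%nat -> is_derive (g j) x (dg j)) ->
  is_derive (fun y => sum_f_R0 (fun j => g j y) n) x (sum_f_R0 dg n).
Proof.
  induction n; intros H.
  - simpl. apply H; lia.
  - simpl. apply (is_derive_plus (fun y => sum_f_R0 (fun j => g j y) n) (g (S n))).
    + apply IHn; intros; apply H; lia.
    + apply H; lia.
Qed.

Lemma is_derive_eq (f : R -> R) x l l' : is_derive f x l -> l = l' -> is_derive f x l'.
Proof. intros H ->; exact H. Qed.

Definition FD (F : nat -> R -> R) (j : nat) (x : R) : R :=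
  match j with O => 0 | _ => F (j-1)%nat x / (x - INR j + 1) end.

Lemma F_der F (hF : IsFFamily F) j x : INR j < x -> is_derive (F j) x (FD F j x).
Proof.
  destruct hF as [h0 hk]. intros Hx. destruct j as [|j'].
  - simpl in *. apply (is_derive_ext_loc (fun _ => 1)).
    + assert (Ho := open_gt 0 x Hx). eapply filter_imp; [|exact Ho].
      intros t Ht; simpl; rewrite h0; lra.
    + exact (@is_derive_const R_AbsRing R_NormedModule 1 x).
  - destruct (hk (S j') ltac:(lia)) as [_ [_ Hd]]. apply Hd; exact Hx.
Qed.

Section Main.
Variables (P F : nat -> R -> R) (hP : IsPFamily P) (hF : IsFFamily F) (k : nat) (hk : (2 <= k)%nat).

Definition term (j : nat) (y : R) := (-1) ^ (k - j - 1) * P (k - j)%nat (y - INR j) * F j y.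
Definition A (x : R) (j : nat) := (-1) ^ (k - j - 1) * (P (k - j - 1)%nat (x - INR j - 1) / (x - INR j)) * F j x.
Definition B (x : R) (j : nat) := (-1) ^ (k - j - 1) * P (k - j)%nat (x - INR j) * FD F j x.

Lemma term_der x j : INR k < x -> (j <= k - 1)%nat -> is_derive (term j) x (A x j + B x j).
Proof.
  intros Hx Hj. unfold term.
  assert (Hkj : INR (k - j) = INR k - INR j) by (apply minus_INR; lia).
  assert (Hjx : INR j < x) by (assert (INR j <= INR k) by (apply le_INR; lia); lra).
  assert (HPd : is_derive (P (k - j)%nat) (x - INR j) (P (k - j - 1)%nat (x - INR j - 1) / (x - INR j))).
  { destruct hP as [_ hPk]. destruct (hPk (k - j)%nat ltac:(lia)) as [_ [_ Hd]].
    apply Hd. rewrite Hkj. lra. }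
  assert (Hlin : is_derive (fun y => y - INR j) x 1).
  { auto_derive; auto; ring. }
  assert (Hc := is_derive_comp (P (k - j)%nat) (fun y => y - INR j) x _ _ HPd Hlin).
  assert (Hs := is_derive_scal _ _ ((-1) ^ (k - j - 1)) _ Hc).
  assert (Hm := is_derive_mult _ _ _ _ _ Hs (F_der F hF j x Hjx) ltac:(intros; apply Rmult_comm)).
  eapply is_derive_eq; [exact Hm|].
  unfold A, B. change (plus ?a ?b) with (a + b). change (mult ?a ?b) with (a * b).
  change (scal ?a ?b) with (a * b). rewrite Rmult_1_l; reflexivity.
Qed.

Lemma telescope x n : INR k < x -> (n <= k - 1)%nat -> sum_f_R0 (fun j => A x j + B x j) n = A x n.
Proof.
  intros Hx. induction n; intros Hn.
  - simpl. unfold B, FD. ring.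
  - simpl. rewrite IHn by lia.
    assert (E : B x (S n) = - A x n).
    { unfold A, B, FD.
      replace (S n - 1)%nat with n by lia.
      assert (Ep : (-1) ^ (k - n - 1) = - (-1) ^ (k - S n - 1)).
      { replace (k - n - 1)%nat with (S (k - S n - 1)) by lia. simpl. ring. }
      rewrite Ep.
      replace (k - S n)%nat with (k - n - 1)%nat by lia.
      rewrite S_INR.
      replace (x - (INR n + 1) + 1) with (x - INR n) by ring.
      replace (x - (INR n + 1)) with (x - INR n - 1) by ring.
      unfold Rdiv. ring. }
    rewrite E. ring.
Qed.

Lemma G_der x : INR k < x ->
  is_derive (fun y => sum_f_R0 (fun j => term j y) (k - 1)) x (F (k - 1)%nat x / (x - INR k + 1)).
Proof.
  intros Hx. eapply is_derive_eq.
  { apply (is_derive_sum term (fun j => A x j + B x j)). intros; apply term_der; auto. }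
  rewrite telescope by (auto; lia). unfold A.
  replace (k - (k - 1) - 1)%nat with 0%nat by lia.
  assert (Hk1 : INR (k - 1) = INR k - 1) by (rewrite minus_INR by lia; simpl; ring).
  rewrite Hk1. destruct hP as [hP0 _]. rewrite hP0 by lra.
  replace (x - (INR k - 1)) with (x - INR k + 1) by ring. simpl. field. lra.
Qed.

Lemma shift_lim j : (j <= k)%nat ->
  filterlim (fun y => y - INR j) (at_right (INR k)) (at_right (INR (k - j))).
Proof.
  intros Hj. rewrite minus_INR by lia.
  intros Q [eps He]. exists eps. intros y Hy Hky. apply He.
  - change (Rabs ((y - INR j) - (INR k - INR j)) < eps).
    replace ((y - INR j) - (INR k - INR j)) with (y - INR k) by ring. exact Hy.
  - simpl. lra.
Qed.

Lemma term_lim j : (j <= k - 1)%nat -> filterlim (term j) (at_right (INR k)) (locally 0).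
Proof.
  intros Hj. unfold term.
  replace 0 with (((-1) ^ (k - j - 1) * 0) * F j (INR k)) by ring.
  apply (lim_mult _ (fun y => (-1) ^ (k - j - 1) * P (k - j)%nat (y - INR j)) (F j)).
  - apply (lim_mult _ (fun _ => (-1) ^ (k - j - 1)) (fun y => P (k - j)%nat (y - INR j))).
    + apply filterlim_const.
    + eapply filterlim_comp; [apply shift_lim; lia|].
      destruct hP as [_ hPk]. apply (hPk (k - j)%nat); lia.
  - eapply filterlim_filter_le_1; [apply filter_le_within|].
    apply (@ex_derive_continuous R_AbsRing R_NormedModule). exists (FD F j (INR k)). apply F_der; auto.
    apply lt_INR; lia.
Qed.

Lemma sum_zero (g : nat -> R) n : (forall j, (j <= n)%nat -> g j = 0) -> sum_f_R0 g n = 0.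
Proof.
  induction n; intros H; simpl.
  - apply H; lia.
  - rewrite IHn by (intros; apply H; lia). rewrite H by lia. ring.
Qed.

Lemma main_sec u : INR k <= u -> F k u = sum_f_R0 (fun j => term j u) (k - 1).
Proof.
  intros Hu.
  destruct hF as [hF0 hFk].
  destruct (hFk k ltac:(lia)) as [Fkk [Fklim Fkd]].
  set (H := fun y => F k y - sum_f_R0 (fun j => term j y) (k - 1)).
  destruct (Req_dec u (INR k)) as [Eu|Nu].
  - subst u. rewrite Fkk. symmetry. apply sum_zero. intros j Hj. unfold term.
    rewrite <- minus_INR by lia. destruct hP as [_ hPk].
    destruct (hPk (k - j)%nat ltac:(lia)) as [Z _]. rewrite Z. ring.
  - assert (Hu' : INR k < u) by lra.
    assert (Hd : forall t, INR k < t -> is_derive H t 0).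
    { intros t Ht. eapply is_derive_eq.
      { apply (is_derive_minus (F k) (fun y => sum_f_R0 (fun j => term j y) (k - 1))).
        - apply Fkd; exact Ht.
        - apply G_der; exact Ht. }
      change (minus ?a ?b) with (a - b). apply Rminus_diag_eq; reflexivity. }
    assert (Hc : forall a, INR k < a <= u -> H a = H u).
    { intros a Ha.
      destruct (MVT_gen H a u (fun _ => 0)) as [c [_ Hc]].
      - intros t Ht. apply Hd. rewrite Rmin_left in Ht by lra. lra.
      - intros t Ht. rewrite Rmin_left in Ht by lra.
        apply continuity_pt_filterlim. apply (@ex_derive_continuous R_AbsRing R_NormedModule).
        exists 0. apply Hd. lra.
      - lra. }
    assert (Hl : filterlim H (at_right (INR k)) (locally 0)).
    { replace 0 with (0 - 0) by ring. apply (lim_minus _ (F k) (fun y => sum_f_R0 (fun j => term j y) (k - 1))); [exact Fklim|].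
      apply (lim_sum _ term). intros; apply term_lim; auto. }
    assert (Hl' : filterlim (fun _ => H u) (at_right (INR k)) (locally 0)).
    { eapply filterlim_ext_loc; [|exact Hl].
      assert (Hpos : 0 < u - INR k) by lra.
      exists (mkposreal _ Hpos). intros y Hy Hky. simpl in *.
      apply Hc. change (Rabs (y - INR k) < u - INR k) in Hy.
      apply Rabs_def2 in Hy. lra. }
    assert (HZ : H u = 0).
    { destruct (Req_dec (H u) 0) as [|Hn]; [auto|exfalso].
      assert (Hp : 0 < Rabs (H u)) by (apply Rabs_pos_lt; exact Hn).
      destruct (Hl' (ball 0 (mkposreal _ Hp))) as [eps He].
      { apply locally_ball. }
      assert (Hep := cond_pos eps).
      assert (Hb := He (INR k + eps / 2)).
      simpl in Hb.
      assert (Hb' : Rabs (H u - 0) < Rabs (H u)).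
      { apply Hb.
        - change (Rabs (INR k + eps / 2 - INR k) < eps).
          rewrite Rabs_right; lra.
        - lra. }
      rewrite Rminus_0_r in Hb'. lra. }
    unfold H in HZ. lra.
Qed.
End Main.

Theorem mainTheorem11 (P F : nat -> R -> R) (hP : IsPFamily P) (hF : IsFFamily F)
  (k : nat) (hk : (2 <= k)%nat) (u : R) (hu : INR k <= u) :
  F k u = sum_f_R0 (fun j : nat =>
            (-1) ^ (k - j - 1) * P (k - j)%nat (u - INR j) * F j u) (k - 1)%nat.
Proof. exact (main_sec P F hP hF k hk u hu). Qed.
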